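(* Consider the proportional mechanism with $n=2$ agents and total budget $B$ equal to the cost constant $C$ (where $C>0$). For every $\epsilon>0$ there exists a type profile $(q_1,q_2)$ with $0<q_1\le q_2$ such that for every pure Nash equilibrium $(x_1^{\mathrm{prop}},x_2^{\mathrm{prop}})$ of the proportional mechanism and every optimal solution $(f,x_1^*,x_2^* )$ of the reward-design problem (both defined in the context, with these $q_1,q_2$, $B=C$), we have \[\frac{x_1^{\mathrm{prop}}+x_2^{\mathrm{prop}}}{x_1^*+x_2^*}\le \epsilon.\]
   Context: There are $n$ agents; agent $i$ has type $q_i>0$ (the best quality it can produce), with $0<q_1\le\cdots\le q_n$. Agent $i$ chooses a quality $x_i\in[0,q_i]$ and incurs cost $x_iC/q_i$, where $C>0$ is a constant. $B>0$ is the budget. Proportional mechanism: agent $i$'s utility is $u_i(x_i,x_{-i})=\dfrac{x_iB}{\sum_{j=1}^n x_j}-\dfrac{x_iC}{q_i}$, with the convention that $u_i=0$ when all $x_j=0$. A pure Nash equilibrium is a profile $(x_1,\dots,x_n)$ with $x_i\in[0,q_i]$ such that no agent can increase its utility by unilaterally changing $x_i$ within $[0,q_i]$. Reward-design problem: a reward function is a map $f:[0,\infty)\to[0,\infty)$; agent $i$'s utility is $u_i(x)=f(x)-xC/q_i$. A pair $(f,x_1^*,\dots,x_n^* )$ is feasible if for each $i$: $0\le x_i^*\le q_i$ and $u_i(x_i^* )\ge u_i(x)$ for all $x\in[0,q_i]$ (incentive constraint), and $\sum_{i=1}^n f(x_i^* )\le B$ (budget constraint). The problem is to maximize $\sum_{i=1}^n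 x_i^*$ over feasible $(f,x^* )$; an optimal solution is a feasible pair attaining the maximum. *)

(* Defs.v *)
From Stdlib Require Import Reals List ClassicalDescription.
Open Scope R_scope.

Definition sum_agents (n : nat) (g : nat -> R) : R :=
  fold_right Rplus 0 (map g (seq 0 n)).

Definition upd (x : nat -> R) (i : nat) (y : R) : nat -> R :=
  fun j => if Nat.eqb j i then y else x j.

Definition prop_utility (n : nat) (B C : R) (q x : nat -> R) (i : nat) : R :=
  if excluded_middle_informative (forall j, (j < n)%nat -> x j = 0)
  then 0
  else x i * B / sum_agents n x - x i * C / q i.

Definition prop_nash (n : nat) (B C : R) (q x : nat -> R) : Prop :=
  (forall i, (i < n)%nat -> 0 <= x i <= q i) /\
  (forall i, (i < n)%nat -> forall y, 0 <= y <= q i ->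
      prop_utility n B C q (upd x i y) i <= prop_utility n B C q x i).

(* Feasible pair (f, xs) of the reward-design problem;
   f : [0,oo) -> [0,oo) is represented by f : R -> R nonnegative on [0,oo)
   (its values on negative reals are irrelevant). *)
Definition rd_feasible (n : nat) (B C : R) (q : nat -> R) (f : R -> R)
    (xs : nat -> R) : Prop :=
  (forall z, 0 <= z -> 0 <= f z) /\
  (forall i, (i < n)%nat ->
     0 <= xs i <= q i /\
     (forall z, 0 <= z <= q i -> f (xs i) - xs i * C / q i >= f z - z * C / q i)) /\
  sum_agents n (fun i => f (xs i)) <= B.

Definition rd_optimal (n : nat) (B C : R) (q : nat -> R) (f : R -> R)
    (xs : nat -> R) : Prop :=
  rd_feasible n B C q f xs /\
  forall (g : R -> R) (ys : nat -> R), rd_feasible n B C q g ys ->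
    sum_agents n ys <= sum_agents n xs.

Definition prof2 (a b : R) : nat -> R := fun i => match i with O => a | _ => b end.

(* Main.v *)
Require Import Defs.
From Stdlib Require Import Reals Lra Lia List ClassicalDescription.
Open Scope R_scope.

Lemma pu_dev0 (C q1 q2 : R) (xp : nat -> R) :
  prop_utility 2 C C (prof2 q1 q2) (upd xp 0 0) 0 = 0.
Proof.
  unfold prop_utility.
  destruct (excluded_middle_informative _); [reflexivity|].
  unfold upd; simpl. unfold Rdiv. ring.
Qed.

Theorem theorem1 :
  forall C : R, 0 < C ->
  forall eps : R, 0 < eps ->
  exists q1 q2 : R, 0 < q1 <= q2 /\
    forall xp : nat -> R, prop_nash 2 C C (prof2 q1 q2) xp ->
    forall (f : R -> R) (xs : nat -> R), rd_optimal 2 C C (prof2 q1 q2) f xs ->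
      (xp 0%nat + xp 1%nat) / (xs 0%nat + xs 1%nat) <= eps.
Proof.
  intros C HC eps He.
  assert (Hp : 0 < / eps) by (apply Rinv_0_lt_compat; lra).
  set (p := / eps) in *.
  set (q := 1 + p).
  assert (Hq : 0 < q) by (unfold q; lra).
  assert (Hiq : 0 < / q) by (apply Rinv_0_lt_compat; lra).
  assert (Hqiq : q * / q = 1) by (field; lra).
  assert (Hq1 : 1 <= q) by (unfold q; lra).
  assert (Hiq1 : / q <= 1) by nra.
  exists 1, q. split; [unfold q; lra|].
  intros xp [Hb Hdev] f xs [_ Hopt].
  assert (Hfeas : rd_feasible 2 C C (prof2 1 q) (fun z => z * C / q)
            (fun i => match i with O => 0 | _ => q end)).
  { split; [|split].
    - intros z Hz. unfold Rdiv.
      apply Rmult_le_pos; [apply Rmult_le_pos|]; lra.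
    - intros i Hi. destruct i as [|[|i]]; [| |lia]; simpl.
      + split; [lra|]. intros z Hz. unfold Rdiv.
        rewrite Rinv_1. assert (0 <= z*C*(1 - / q)) by (apply Rmult_le_pos; [apply Rmult_le_pos|]; lra). lra.
      + split; [lra|]. intros z Hz. lra.
    - unfold sum_agents; simpl. unfold Rdiv.
      replace (q * C * / q) with (C * (q * / q)) by ring. rewrite Hqiq. lra. }
  specialize (Hopt _ _ Hfeas).
  unfold sum_agents in Hopt; simpl in Hopt.
  assert (HT : q <= xs 0%nat + xs 1%nat) by lra.
  assert (Hb0 := Hb 0%nat ltac:(lia)). assert (Hb1 := Hb 1%nat ltac:(lia)).
  simpl in Hb0, Hb1.
  destruct (Req_dec (xp 0%nat) 0) as [H0|H0].
  - destruct (Req_dec (xp 1%nat) 0) as [H1|H1].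
    + rewrite H0, H1. unfold Rdiv. rewrite Rplus_0_r, Rmult_0_l. lra.
    + exfalso.
      assert (Hx1 : 0 < xp 1%nat) by lra.
      specialize (Hdev 1%nat ltac:(lia) (xp 1%nat / 2) ltac:(simpl; lra)).
      unfold prop_utility in Hdev.
      destruct (excluded_middle_informative _) as [A|_].
      { specialize (A 1%nat ltac:(lia)). unfold upd in A; simpl in A. lra. }
      destruct (excluded_middle_informative _) as [A|_].
      { specialize (A 1%nat ltac:(lia)). lra. }
      unfold sum_agents, upd in Hdev; simpl in Hdev.
      rewrite H0 in Hdev.
      rewrite !Rplus_0_l, !Rplus_0_r in Hdev.
      replace (xp 1%nat / 2 * C / (xp 1%nat / 2)) with C in Hdev by (field; lra).
      replace (xp 1%nat * C / xp 1%nat) with C in Hdev by (field; lra).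
      unfold Rdiv in Hdev.
      assert (0 < xp 1%nat * C * / q) by (apply Rmult_lt_0_compat; [apply Rmult_lt_0_compat|]; lra).
      lra.
  - assert (Hx0 : 0 < xp 0%nat) by lra.
    specialize (Hdev 0%nat ltac:(lia) 0 ltac:(simpl; lra)).
    rewrite pu_dev0 in Hdev.
    unfold prop_utility in Hdev.
    destruct (excluded_middle_informative _) as [A|_].
    { specialize (A 0%nat ltac:(lia)). lra. }
    unfold sum_agents in Hdev; simpl in Hdev.
    rewrite Rplus_0_r in Hdev.
    set (S := xp 0%nat + xp 1%nat) in *.
    assert (HS : 0 < S) by (unfold S; lra).
    assert (HS1 : S <= 1).
    { destruct (Rle_dec S 1) as [|Hn]; [assumption|exfalso].
      assert (Hw : 0 < / S) by (apply Rinv_0_lt_compat; lra).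
      assert (HSw : S * / S = 1) by (field; lra).
      assert (Hw1 : / S < 1) by nra.
      unfold Rdiv in Hdev. rewrite Rinv_1 in Hdev.
      assert (0 < xp 0%nat * C) by nra.
      nra. }
    assert (HTp : 0 < xs 0%nat + xs 1%nat) by lra.
    apply (Rmult_le_reg_r (xs 0%nat + xs 1%nat)); [assumption|].
    unfold Rdiv. rewrite Rmult_assoc, Rinv_l by lra. rewrite Rmult_1_r.
    assert (eps * q = eps + 1) by (unfold q, p; field; lra).
    nra.
Qed.
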